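(* Let $(X_1,d_1)$, $(X_2,d_2)$ be proper CAT(0) spaces, let $\Gamma$ be an infinite group acting convex co-compactly by isometries on $X_1$ and on $X_2$ via homomorphisms $\rho_i:\Gamma\to\mathrm{Isom}(X_i)$, and suppose the diagonal action $\rho=(\rho_1,\rho_2)$ of $\Gamma$ on $X_1\times X_2$ is convex co-compact, with $C\subset X_1\times X_2$ a nonempty $\rho(\Gamma)$-invariant convex subset such that $C/\rho(\Gamma)$ is compact. Fix $x=(x_1,x_2)\in C$, and for $i=1,2$ let $l_i$ be a complete geodesic line in $X_i$ through $x_i$. Let $F=l_1\times l_2$ (a flat isometric to the Euclidean plane) and $C_F=F\cap C$. If $C_F$ has infinite diameter, then $C_F$ lies within finite Hausdorff distance of a geodesic ray or of a complete geodesic line in $F$.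
   Context: $X_1\times X_2$ carries the product metric $\sqrt{d_1^2+d_2^2}$. A properly discontinuous isometric action on a proper CAT(0) space $X$ is convex co-compact if there is a nonempty closed invariant convex subset with compact quotient. *)

(* Defs.v *)
From Stdlib Require Import Reals List.
Open Scope R_scope.

Section Metric.
Context {X : Type} (d : X -> X -> R).

Definition is_metric : Prop :=
  (forall x y, 0 <= d x y) /\ (forall x y, d x y = 0 <-> x = y) /\
  (forall x y, d x y = d y x) /\ (forall x y z, d x z <= d x y + d y z).

Definition geodesic_segment (g : R -> X) (x y : X) : Prop :=
  g 0 = x /\ g (d x y) = y /\
  forall s t, 0 <= s <= d x y -> 0 <= t <= d x y -> d (g s) (g t) = Rabs (s - t).

Definition geodesic_space : Prop := forall x y, exists g, geodesic_segment g x y.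

Definition geodesic_line (l : R -> X) : Prop :=
  forall s t, d (l s) (l t) = Rabs (s - t).

Definition geodesic_ray (r : R -> X) : Prop :=
  forall s t, 0 <= s -> 0 <= t -> d (r s) (r t) = Rabs (s - t).

Definition open_set (U : X -> Prop) : Prop :=
  forall x, U x -> exists e, 0 < e /\ forall y, d x y < e -> U y.

Definition closed_set (C : X -> Prop) : Prop := open_set (fun x => ~ C x).

Definition compact_set (K : X -> Prop) : Prop :=
  forall (I : Type) (U : I -> X -> Prop),
    (forall i, open_set (U i)) -> (forall x, K x -> exists i, U i x) ->
    exists l : list I, forall x, K x -> exists i, In i l /\ U i x.

Definition proper_space : Prop :=
  forall x r, compact_set (fun y => d x y <= r).

Definition convex_set (C : X -> Prop) : Prop :=
  forall x y g, C x -> C y -> geodesic_segment g x y ->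
    forall t, 0 <= t <= d x y -> C (g t).

Definition rel_open (C V : X -> Prop) : Prop :=
  exists W, open_set W /\ forall x, C x -> (V x <-> W x).

Definition unbounded (A : X -> Prop) : Prop :=
  forall M, exists p q, A p /\ A q /\ M < d p q.

Definition hausdorff_finite (A B : X -> Prop) : Prop :=
  exists D, (forall a, A a -> exists b, B b /\ d a b <= D) /\
            (forall b, B b -> exists a, A a /\ d a b <= D).
End Metric.

Definition eucl2 (p q : R * R) : R :=
  sqrt ((fst p - fst q) ^ 2 + (snd p - snd q) ^ 2).

(* p lies on the side g from a to b, and pbar is its comparison point on the
   segment [a', b'] of the comparison triangle *)
Definition on_side {X} (d : X -> X -> R) (g : R -> X) (a b : X) (a' b' : R * R)
  (p : X) (pbar : R * R) : Prop :=
  exists t, 0 <= t <= d a b /\ p = g t /\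
    pbar = (fst a' + t / d a b * (fst b' - fst a'),
            snd a' + t / d a b * (snd b' - snd a')).

Definition CAT0 {X} (d : X -> X -> R) : Prop :=
  is_metric d /\ geodesic_space d /\
  forall (x y z : X) (g1 g2 g3 : R -> X),
    geodesic_segment d g1 x y -> geodesic_segment d g2 y z ->
    geodesic_segment d g3 z x ->
    forall x' y' z' : R * R,
      eucl2 x' y' = d x y -> eucl2 y' z' = d y z -> eucl2 z' x' = d z x ->
      let in_tri p pb := on_side d g1 x y x' y' p pb \/
                         on_side d g2 y z y' z' p pb \/
                         on_side d g3 z x z' x' p pb in
      forall p pb q qb, in_tri p pb -> in_tri q qb -> d p q <= eucl2 pb qb.

Definition prod_dist {X1 X2} (d1 : X1 -> X1 -> R) (d2 : X2 -> X2 -> R)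
  (p q : X1 * X2) : R :=
  sqrt (d1 (fst p) (fst q) ^ 2 + d2 (snd p) (snd q) ^ 2).

Definition is_group {G} (mul : G -> G -> G) (one : G) (inv : G -> G) : Prop :=
  (forall a b c, mul a (mul b c) = mul (mul a b) c) /\
  (forall a, mul one a = a) /\ (forall a, mul a one = a) /\
  (forall a, mul (inv a) a = one) /\ (forall a, mul a (inv a) = one).

Definition finite_set {G} (S : G -> Prop) : Prop :=
  exists l : list G, forall g, S g -> In g l.

Definition isometric_action {G X} (d : X -> X -> R) (mul : G -> G -> G) (one : G)
  (rho : G -> X -> X) : Prop :=
  (forall g x y, d (rho g x) (rho g y) = d x y) /\
  (forall g y, exists x, rho g x = y) /\
  (forall x, rho one x = x) /\
  (forall g h x, rho (mul g h) x = rho g (rho h x)).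

Definition diag_action {G X1 X2} (rho1 : G -> X1 -> X1) (rho2 : G -> X2 -> X2)
  (g : G) (p : X1 * X2) : X1 * X2 := (rho1 g (fst p), rho2 g (snd p)).

Definition properly_discontinuous {G X} (d : X -> X -> R) (rho : G -> X -> X) : Prop :=
  forall K, compact_set d K ->
    finite_set (fun g => exists x, K x /\ K (rho g (x))).

Definition invariant_set {G X} (rho : G -> X -> X) (C : X -> Prop) : Prop :=
  forall g x, C x -> C (rho g x).

(* C / rho(G) is compact in the quotient topology: open sets of C/G correspond
   to G-invariant relatively open subsets of C. *)
Definition quotient_compact {G X} (d : X -> X -> R) (rho : G -> X -> X)
  (C : X -> Prop) : Prop :=
  forall (I : Type) (U : I -> X -> Prop),
    (forall i, rel_open d C (U i)) ->
    (forall i g x, C x -> U i x -> U i (rho g x)) ->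
    (forall x, C x -> exists i, U i x) ->
    exists l : list I, forall x, C x -> exists i, In i l /\ U i x.

Definition cocompact_convex_set {G X} (d : X -> X -> R) (rho : G -> X -> X)
  (C : X -> Prop) : Prop :=
  (exists x, C x) /\ closed_set d C /\ convex_set d C /\ invariant_set rho C /\
  quotient_compact d rho C.

Definition convex_cocompact {G X} (d : X -> X -> R) (rho : G -> X -> X) : Prop :=
  properly_discontinuous d rho /\ exists C, cocompact_convex_set d rho C.

(* Main.v *)
Require Import Defs.
From Stdlib Require Import Reals List Lra Lia Psatz Classical ClassicalEpsilon.
Open Scope R_scope.


Definition d2e (s t s' t' : R) := sqrt ((s - s')^2 + (t - t')^2).

Definition PC (S : R -> R -> Prop) : Prop :=
  exists p1 p2 v1 v2 E, v1^2 + v2^2 = 1 /\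
   (((forall s t, S s t -> exists tau, 0 <= tau /\ d2e s t (p1 + tau*v1) (p2 + tau*v2) <= E) /\
    (forall tau, 0 <= tau -> exists s t, S s t /\ d2e s t (p1 + tau*v1) (p2 + tau*v2) <= E))
   \/
    ((forall s t, S s t -> exists tau, d2e s t (p1 + tau*v1) (p2 + tau*v2) <= E) /\
    (forall tau, exists s t, S s t /\ d2e s t (p1 + tau*v1) (p2 + tau*v2) <= E))).

Lemma choose_h (S: R -> R -> Prop) : exists h : R -> R, forall x, (exists y, S x y) -> S x (h x).
Proof.
  assert (H: forall x, exists y, (exists y, S x y) -> S x y).
  { intro x; destruct (classic (exists y, S x y)) as [[y Hy]|Hn].
    - exists y; auto.
    - exists 0; intro H; contradiction. }
  exists (fun x => proj1_sig (constructive_indefinite_description _ (H x))).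
  intros x. exact (proj2_sig (constructive_indefinite_description _ (H x))).
Qed.

Lemma d2e_vert x y y' : d2e x y x y' = Rabs (y - y').
Proof.
  unfold d2e. replace ((x - x)^2 + (y - y')^2) with ((Rabs (y - y'))^2)
    by (rewrite pow2_abs; ring).
  apply sqrt_pow2, Rabs_pos.
Qed.

Lemma d2e_le s t s' t' : d2e s t s' t' <= Rabs (s - s') + Rabs (t - t').
Proof.
  unfold d2e. rewrite <- (sqrt_pow2 (Rabs (s - s') + Rabs (t - t'))).
  2: pose proof (Rabs_pos (s-s')); pose proof (Rabs_pos (t-t')); lra.
  apply sqrt_le_1_alt. rewrite <- (pow2_abs (s - s')), <- (pow2_abs (t - t')).
  pose proof (Rabs_pos (s-s')); pose proof (Rabs_pos (t-t')); nra.
Qed.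

Lemma div_bounds A D u : 0 < u -> -D <= A <= D -> -(D/u) <= A/u <= D/u.
Proof.
  intros Hu HA; unfold Rdiv; assert (0 < /u) by (apply Rinv_0_lt_compat; lra); split; nra.
Qed.

Lemma core (S : R -> R -> Prop) (D : R) :
  (forall s1 t1 s2 t2 l, S s1 t1 -> S s2 t2 -> 0 <= l <= 1 ->
     S (s1 + l*(s2-s1)) (t1 + l*(t2-t1))) ->
  (forall s t t', S s t -> S s t' -> t - t' <= D) ->
  (forall M, exists s t, S s t /\ M < s) -> PC S.
Proof.
  intros Hc Hf Hu.
  destruct (Hu 0) as [a [ya [Ha _]]].
  assert (HD : 0 <= D) by (specialize (Hf a ya ya Ha Ha); lra).
  destruct (choose_h S) as [h Hh].
  set (I := fun x => exists y, S x y) in *.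
  assert (Ia : I a) by (exists ya; exact Ha).
  assert (Iint : forall x1 x2 x, I x1 -> I x2 -> x1 <= x <= x2 -> I x).
  { intros x1 x2 x [y1 H1] [y2 H2] Hx.
    destruct (Req_dec x1 x2) as [E|E].
    - subst x2. assert (x = x1) by lra. subst x. exists y1; exact H1.
    - set (l := (x - x1)/(x2 - x1)).
      assert (Hl1 : l * (x2 - x1) = x - x1) by (unfold l; field; lra).
      assert (Hl : 0 <= l <= 1) by nra.
      exists (y1 + l*(y2-y1)). replace x with (x1 + l*(x2-x1)) by lra.
      apply Hc; auto. }
  assert (AA : forall x1 x x2, I x1 -> I x2 -> x1 < x < x2 ->
     -D <= h x - (h x1 + (x-x1)/(x2-x1) * (h x2 - h x1)) <= D).
  { intros x1 x x2 I1 I2 Hx.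
    set (l := (x-x1)/(x2-x1)).
    assert (Hl1 : l * (x2 - x1) = x - x1) by (unfold l; field; lra).
    assert (Hl : 0 <= l <= 1) by nra.
    pose proof (Hc x1 (h x1) x2 (h x2) l (Hh x1 I1) (Hh x2 I2) Hl) as P.
    replace (x1 + l*(x2-x1)) with x in P by lra.
    assert (Ix : I x) by (eexists; exact P).
    pose proof (Hf x _ _ P (Hh x Ix)). pose proof (Hf x _ _ (Hh x Ix) P). lra. }
  set (sg := fun x => (h x - h a)/(x - a)).
  assert (Dpos : forall x, a < x -> 0 <= D/(x-a)).
  { intros x Hx; unfold Rdiv; apply Rmult_le_pos; [lra|left; apply Rinv_0_lt_compat; lra]. }
  assert (key : forall x x', a < x < x' -> I x' ->
            sg x - D/(x-a) <= sg x' <= sg x + D/(x-a)).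
  { intros x x' Hx Ix'.
    pose proof (AA a x x' Ia Ix' Hx) as P.
    assert (E1 : (x-a)/(x'-a)*(h x' - h a) = (x-a)*sg x') by (unfold sg; field; lra).
    rewrite E1 in P.
    assert (E2 : sg x - sg x' = (h x - h a - (x-a)*sg x')/(x-a)) by (unfold sg; field; lra).
    assert (P2 : -D <= h x - h a - (x-a)*sg x' <= D) by lra.
    pose proof (div_bounds _ _ (x-a) ltac:(lra) P2). lra. }
  destruct (Hu a) as [x0 [y0 [Hx0 Hax0]]].
  assert (Ix0 : I x0) by (exists y0; exact Hx0).
  set (Es := fun z => exists x, a < x /\ I x /\ z = sg x - D/(x-a)).
  assert (UB : forall x, a < x -> I x -> is_upper_bound Es (sg x + D/(x-a))).
  { intros x Hx Ix z [x' [Hx' [Ix' ->]]].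
    destruct (Rtotal_order x' x) as [Hlt|[Heq|Hgt]].
    - pose proof (key x' x (conj Hx' Hlt) Ix). pose proof (Dpos x Hx). lra.
    - subst. pose proof (Dpos x Hx). lra.
    - pose proof (key x x' (conj Hx Hgt) Ix'). pose proof (Dpos x' Hx'). lra. }
  destruct (completeness Es) as [m [Hm1 Hm2]].
  { exists (sg x0 + D/(x0-a)); apply UB; auto. }
  { exists (sg x0 - D/(x0-a)); exists x0; auto. }
  assert (Good1 : forall x, a < x -> I x -> -D <= h x - h a - m*(x-a) <= D).
  { intros x Hx Ix.
    assert (H1 : sg x - D/(x-a) <= m) by (apply Hm1; exists x; auto).
    assert (H2 : m <= sg x + D/(x-a)) by (apply Hm2, UB; auto).
    assert (E1: (sg x - D/(x-a))*(x-a) = h x - h a - D) by (unfold sg; field; lra).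
    assert (E2: (sg x + D/(x-a))*(x-a) = h x - h a + D) by (unfold sg; field; lra).
    pose proof (Rmult_le_compat_r (x-a) _ _ ltac:(lra) H1) as P1.
    pose proof (Rmult_le_compat_r (x-a) _ _ ltac:(lra) H2) as P2.
    rewrite E1 in P1; rewrite E2 in P2. lra. }
  assert (Good : forall x, I x -> -(3*D) <= h x - h a - m*(x-a) <= 3*D).
  { intros x Ix. destruct (Rtotal_order a x) as [Hlt|[Heq|Hgt]].
    - pose proof (Good1 x Hlt Ix). lra.
    - rewrite <- Heq. replace (h a - h a - m*(a-a)) with 0 by ring. lra.
    - set (x2 := 2*a - x).
      destruct (Hu x2) as [z [tz [Hz Hz2]]].
      assert (Ix2 : I x2). { apply (Iint a z). exact Ia. exists tz; exact Hz. unfold x2 in *; lra. }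
      pose proof (AA x a x2 Ix Ix2 ltac:(unfold x2; lra)) as P.
      replace ((a-x)/(x2-x)) with (1/2) in P by (unfold x2; field; lra).
      pose proof (Good1 x2 ltac:(unfold x2; lra) Ix2) as P2.
      replace (m*(x2-a)) with (-(m*(x-a))) in P2 by (unfold x2; ring).
      lra. }
  assert (Good' : forall x y, S x y -> -(4*D) <= y - h a - m*(x-a) <= 4*D).
  { intros x y Hxy. assert (Ix : I x) by (exists y; auto).
    pose proof (Good x Ix). pose proof (Hf x y (h x) Hxy (Hh x Ix)).
    pose proof (Hf x (h x) y (Hh x Ix) Hxy). lra. }
  remember (sqrt (1 + m^2)) as k eqn:Hkdef.
  assert (Hk : 0 < k) by (subst k; apply sqrt_lt_R0; nra).
  assert (Hk2 : k * k = 1 + m^2) by (subst k; apply sqrt_sqrt; nra).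
  assert (Hv : (1/k)^2 + (m/k)^2 = 1).
  { replace ((1/k)^2 + (m/k)^2) with ((1 + m^2)/(k*k)) by (field; lra).
    rewrite <- Hk2. field; lra. }
  destruct (classic (forall M, exists s t, S s t /\ s < M)) as [Hlo|Hnlo].
  - exists a, (h a), (1/k), (m/k), (4*D). split; [exact Hv|]. right. split.
    + intros s t Hst. exists ((s - a)*k).
      replace (a + (s-a)*k*(1/k)) with s by (field; lra).
      replace (h a + (s-a)*k*(m/k)) with (h a + m*(s-a)) by (field; lra).
      rewrite d2e_vert. apply Rabs_le. pose proof (Good' s t Hst). lra.
    + intros tau. set (x := a + tau/k).
      destruct (Hlo x) as [s1 [t1 [H1 H1']]].
      destruct (Hu x) as [s2 [t2 [H2 H2']]].
      assert (Ix : I x) by (apply (Iint s1 s2); [exists t1|exists t2|]; auto; lra).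
      exists x, (h x). split; [auto|].
      replace (a + tau*(1/k)) with x by (unfold x; field; lra).
      replace (h a + tau*(m/k)) with (h a + m*(x-a)) by (unfold x; field; lra).
      rewrite d2e_vert. apply Rabs_le. pose proof (Good x Ix). lra.
  - apply not_all_ex_not in Hnlo. destruct Hnlo as [B HB].
    assert (HB' : forall s t, S s t -> B <= s).
    { intros s t Hst. destruct (Rlt_le_dec s B); auto. exfalso; apply HB; eauto. }
    destruct (completeness (fun z => I (-z))) as [be [Hb1 Hb2]].
    { exists (-B). intros z [t Hz]. pose proof (HB' _ _ Hz). lra. }
    { exists (-a). rewrite Ropp_involutive. auto. }
    set (al := - be).
    assert (Hal1 : forall x, I x -> al <= x).
    { intros x Ix. assert (-x <= be) by (apply Hb1; rewrite Ropp_involutive; auto). unfold al; lra. }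
    assert (Hal2 : exists x0, I x0 /\ x0 < al + 1).
    { apply NNPP; intro Hn.
      assert (be <= be - 1).
      { apply Hb2. intros z Hz. destruct (Rlt_le_dec (-z) (al + 1)) as [Hl|Hl].
        - exfalso; apply Hn; exists (-z); auto.
        - unfold al in Hl; lra. }
      lra. }
    destruct Hal2 as [x1 [Ix1 Hx1]].
    pose proof (Rabs_pos m).
    exists al, (h a + m*(al - a)), (1/k), (m/k), (7*D + 1 + Rabs m).
    split; [exact Hv|]. left. split.
    + intros s t Hst. assert (Is : I s) by (exists t; auto).
      pose proof (Hal1 s Is).
      exists ((s - al)*k). split; [apply Rmult_le_pos; lra|].
      replace (al + (s-al)*k*(1/k)) with s by (field; lra).
      replace (h a + m*(al - a) + (s-al)*k*(m/k)) with (h a + m*(s-a)) by (field; lra).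
      rewrite d2e_vert. apply Rabs_le. pose proof (Good' s t Hst). lra.
    + intros tau Htau. set (x := al + tau/k).
      assert (Hx : al <= x).
      { unfold x. assert (0 <= tau/k) by (unfold Rdiv; apply Rmult_le_pos; [lra|left; apply Rinv_0_lt_compat; lra]). lra. }
      set (x' := Rmax x x1).
      assert (Hxx : 0 <= x' - x <= 1).
      { unfold x', Rmax. destruct (Rle_dec x x1); lra. }
      destruct (Hu x') as [z [tz [Hz Hz2]]].
      assert (Ix' : I x').
      { apply (Iint x1 z); [auto|exists tz; auto|]. split; [apply Rmax_r|lra]. }
      exists x', (h x'). split; [auto|].
      replace (al + tau*(1/k)) with x by (unfold x; field; lra).
      replace (h a + m*(al - a) + tau*(m/k)) with (h a + m*(x-a)) by (unfold x; field; lra).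
      eapply Rle_trans; [apply d2e_le|].
      replace (h x' - (h a + m*(x-a))) with ((h x' - h a - m*(x'-a)) + m*(x'-x)) by ring.
      eapply Rle_trans.
      { apply Rplus_le_compat_l. apply Rabs_triang. }
      rewrite Rabs_mult.
      assert (Rabs (x' - x) <= 1) by (apply Rabs_le; lra).
      assert (Rabs m * Rabs (x' - x) <= Rabs m * 1) by (apply Rmult_le_compat_l; auto).
      assert (Rabs (h x' - h a - m*(x'-a)) <= 3*D) by (apply Rabs_le; apply Good; auto).
      lra.
Qed.

Lemma transport_neg S : PC (fun s t => S (-s) t) -> PC S.
Proof.
  intros [p1 [p2 [v1 [v2 [E [Hv H]]]]]].
  exists (-p1), p2, (-v1), v2, E. split; [nra|].
  assert (Eq : forall s t tau, d2e s t (-p1 + tau*(-v1)) (p2 + tau*v2) = d2e (-s) t (p1 + tau*v1) (p2 + tau*v2)).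
  { intros; unfold d2e; f_equal; ring. }
  destruct H as [[H1 H2]|[H1 H2]]; [left|right]; split.
  - intros s t Hst. destruct (H1 (-s) t) as [tau [T1 T2]]. rewrite Ropp_involutive; auto.
    exists tau; rewrite Eq; auto.
  - intros tau Ht. destruct (H2 tau Ht) as [s [t [T1 T2]]]. exists (-s), t. rewrite Eq, Ropp_involutive; auto.
  - intros s t Hst. destruct (H1 (-s) t) as [tau T2]. rewrite Ropp_involutive; auto.
    exists tau; rewrite Eq; auto.
  - intros tau. destruct (H2 tau) as [s [t [T1 T2]]]. exists (-s), t. rewrite Eq, Ropp_involutive; auto.
Qed.

Lemma transport_swap S : PC (fun s t => S t s) -> PC S.
Proof.
  intros [p1 [p2 [v1 [v2 [E [Hv H]]]]]].
  exists p2, p1, v2, v1, E. split; [nra|].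
  assert (Eq : forall s t tau, d2e s t (p2 + tau*v2) (p1 + tau*v1) = d2e t s (p1 + tau*v1) (p2 + tau*v2)).
  { intros; unfold d2e; f_equal; ring. }
  destruct H as [[H1 H2]|[H1 H2]]; [left|right]; split.
  - intros s t Hst. destruct (H1 t s Hst) as [tau [T1 T2]]. exists tau; rewrite Eq; auto.
  - intros tau Ht. destruct (H2 tau Ht) as [s [t [T1 T2]]]. exists t, s. rewrite Eq; auto.
  - intros s t Hst. destruct (H1 t s Hst) as [tau T2]. exists tau; rewrite Eq; auto.
  - intros tau. destruct (H2 tau) as [s [t [T1 T2]]]. exists t, s. rewrite Eq; auto.
Qed.

Definition convS (S : R -> R -> Prop) := forall s1 t1 s2 t2 l, S s1 t1 -> S s2 t2 -> 0 <= l <= 1 ->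
     S (s1 + l*(s2-s1)) (t1 + l*(t2-t1)).

Lemma core_lo S D : convS S -> (forall s t t', S s t -> S s t' -> t - t' <= D) ->
  (forall M, exists s t, S s t /\ s < M) -> PC S.
Proof.
  intros Hc Hf Hl. apply transport_neg. apply (core _ D).
  - intros s1 t1 s2 t2 l H1 H2 Hl'.
    replace (- (s1 + l*(s2-s1))) with (-s1 + l*(-s2 - -s1)) by ring. apply Hc; auto.
  - intros s t t'. apply Hf.
  - intros M. destruct (Hl (-M)) as [s [t [H1 H2]]]. exists (-s), t.
    rewrite Ropp_involutive. split; [auto|lra].
Qed.

Lemma convS_swap S : convS S -> convS (fun s t => S t s).
Proof. intros Hc s1 t1 s2 t2 l H1 H2 Hl. apply Hc; auto. Qed.

Lemma PC_of_unb S D1 D2 : convS S ->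
  (forall s t t', S s t -> S s t' -> t - t' <= D1) ->
  (forall s s' t, S s t -> S s' t -> s - s' <= D2) ->
  (forall M, exists s t s' t', S s t /\ S s' t' /\ M < d2e s t s' t') -> PC S.
Proof.
  intros Hc Hf1 Hf2 Hu.
  destruct (classic (forall M, exists s t, S s t /\ M < s)) as [A|A].
  { apply (core S D1); auto. }
  destruct (classic (forall M, exists s t, S s t /\ s < M)) as [B|B].
  { apply (core_lo S D1); auto. }
  destruct (classic (forall M, exists s t, S t s /\ M < s)) as [C|C].
  { apply transport_swap. apply (core _ D2).
    - exact (convS_swap S Hc).
    - intros s t t' H1 H2. apply (Hf2 t t' s); auto.
    - auto. }
  destruct (classic (forall M, exists s t, S t s /\ s < M)) as [E|E].
  { apply transport_swap. apply (core_lo _ D2).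
    - exact (convS_swap S Hc).
    - intros s t t' H1 H2. apply (Hf2 t t' s); auto.
    - auto. }
  exfalso.
  apply not_all_ex_not in A; destruct A as [a1 A].
  apply not_all_ex_not in B; destruct B as [b1 B].
  apply not_all_ex_not in C; destruct C as [c1 C].
  apply not_all_ex_not in E; destruct E as [e1 E].
  assert (HA : forall s t, S s t -> s <= a1).
  { intros s t H. destruct (Rlt_le_dec a1 s); auto. exfalso; apply A; eauto. }
  assert (HB : forall s t, S s t -> b1 <= s).
  { intros s t H. destruct (Rlt_le_dec s b1); auto. exfalso; apply B; eauto. }
  assert (HC : forall s t, S s t -> t <= c1).
  { intros s t H. destruct (Rlt_le_dec c1 t); auto. exfalso; apply C; eauto. }
  assert (HE : forall s t, S s t -> e1 <= t).
  { intros s t H. destruct (Rlt_le_dec t e1); auto. exfalso; apply E; eauto. }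
  destruct (Hu ((a1 - b1) + (c1 - e1))) as [s [t [s' [t' [H1 [H2 H3]]]]]].
  pose proof (d2e_le s t s' t').
  assert (Rabs (s - s') <= a1 - b1).
  { apply Rabs_le. pose proof (HA _ _ H1); pose proof (HA _ _ H2); pose proof (HB _ _ H1); pose proof (HB _ _ H2); lra. }
  assert (Rabs (t - t') <= c1 - e1).
  { apply Rabs_le. pose proof (HC _ _ H1); pose proof (HC _ _ H2); pose proof (HE _ _ H1); pose proof (HE _ _ H2); lra. }
  lra.
Qed.
Lemma In_le_sum (l : list nat) i : In i l -> (i <= list_sum l)%nat.
Proof. induction l as [|a l IH]; simpl; [tauto|]. intros [->|H]; [lia|]. specialize (IH H); lia. Qed.

Lemma fold_bound {A} (f : A -> R) (L : list A) : (forall k, 0 <= f k) ->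
  0 <= fold_right (fun k acc => f k + acc) 0 L /\
  forall k, In k L -> f k <= fold_right (fun k acc => f k + acc) 0 L.
Proof.
  intros Hf. induction L as [|a L [IH1 IH2]]; simpl.
  - split; [lra|tauto].
  - split; [pose proof (Hf a); lra|]. intros k [->|H]; [lra|]. pose proof (IH2 k H); pose proof (Hf a); lra.
Qed.

Lemma sqrt_ge a b : 0 <= a -> a <= sqrt (a^2 + b^2).
Proof. intros Ha. rewrite <- (sqrt_pow2 a Ha) at 1. apply sqrt_le_1_alt. nra. Qed.

Lemma sqrt_sq_abs x : sqrt (x^2) = Rabs x.
Proof. rewrite <- pow2_abs. apply sqrt_pow2, Rabs_pos. Qed.

Lemma cover X1 X2 (d1 : X1 -> X1 -> R) (d2 : X2 -> X2 -> R) G (mul : G -> G -> G) one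
  (rho1 : G -> X1 -> X1) (rho2 : G -> X2 -> X2) C x1 x2 :
  is_metric d1 -> is_metric d2 -> isometric_action d1 mul one rho1 -> isometric_action d2 mul one rho2 ->
  quotient_compact (prod_dist d1 d2) (diag_action rho1 rho2) C ->
  exists N, forall p1 p2, C (p1,p2) -> exists g, d1 (rho1 g x1) p1 < N /\ d2 (rho2 g x2) p2 < N.
Proof.
  intros [d1pos [_ [d1sym d1tri]]] [d2pos [_ [d2sym d2tri]]] [iso1 [_ [one1 mul1]]] [iso2 [_ [one2 mul2]]] Q.
  set (U := fun (n:nat) (p : X1*X2) => exists g, d1 (rho1 g x1) (fst p) < INR n /\ d2 (rho2 g x2) (snd p) < INR n).
  destruct (Q nat U) as [l Hl].
  - intro n. exists (U n). split; [|tauto]. intros p [g [H1 H2]].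
    exists (Rmin (INR n - d1 (rho1 g x1) (fst p)) (INR n - d2 (rho2 g x2) (snd p))). split.
    + apply Rmin_glb_lt; lra.
    + intros y Hy. exists g.
      pose proof (Rmin_l (INR n - d1 (rho1 g x1) (fst p)) (INR n - d2 (rho2 g x2) (snd p))).
      pose proof (Rmin_r (INR n - d1 (rho1 g x1) (fst p)) (INR n - d2 (rho2 g x2) (snd p))).
      unfold prod_dist in Hy.
      pose proof (sqrt_ge (d1 (fst p) (fst y)) (d2 (snd p) (snd y)) (d1pos _ _)).
      pose proof (sqrt_ge (d2 (snd p) (snd y)) (d1 (fst p) (fst y)) (d2pos _ _)).
      rewrite Rplus_comm in H4.
      pose proof (d1tri (rho1 g x1) (fst p) (fst y)). pose proof (d2tri (rho2 g x2) (snd p) (snd y)).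
      split; lra.
  - intros n h p Cp [g [H1 H2]]. exists (mul h g). unfold diag_action; simpl.
    rewrite mul1, iso1, mul2, iso2. auto.
  - intros p Cp. destruct (INR_archimed 1 (d1 x1 (fst p) + d2 x2 (snd p))) as [n Hn]; [lra|].
    exists n, one. rewrite one1, one2. pose proof (d1pos x1 (fst p)); pose proof (d2pos x2 (snd p)). lra.
  - exists (INR (list_sum l)). intros p1 p2 Cp. destruct (Hl _ Cp) as [i [Hi [g [H1 H2]]]].
    exists g. simpl in H1, H2. pose proof (le_INR _ _ (In_le_sum l i Hi)). lra.
Qed.

Lemma fiber X1 X2 (d1 : X1 -> X1 -> R) (d2 : X2 -> X2 -> R) G (mul : G -> G -> G) one inv
  (rho1 : G -> X1 -> X1) (rho2 : G -> X2 -> X2) (C : X1 * X2 -> Prop) x1 x2 N :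
  is_metric d1 -> is_metric d2 -> is_group mul one inv ->
  isometric_action d1 mul one rho1 -> isometric_action d2 mul one rho2 ->
  proper_space d1 -> properly_discontinuous d1 rho1 ->
  (forall p1 p2, C (p1,p2) -> exists g, d1 (rho1 g x1) p1 < N /\ d2 (rho2 g x2) p2 < N) ->
  exists D, forall p1 p2 q2, C (p1,p2) -> C (p1,q2) -> d2 p2 q2 <= D.
Proof.
  intros [d1pos [_ [d1sym d1tri]]] [d2pos [_ [d2sym d2tri]]] [_ [_ [_ [invl invr]]]]
    [iso1 [_ [one1 mul1]]] [iso2 [_ [one2 mul2]]] Pr PD HN.
  destruct (PD (fun y => d1 x1 y <= N) (Pr x1 N)) as [L HL].
  destruct (fold_bound (fun k => d2 (rho2 k x2) x2) L (fun k => d2pos _ _)) as [HM0 HM].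
  set (M := fold_right (fun k acc => d2 (rho2 k x2) x2 + acc) 0 L) in *.
  exists (2*N + M). intros p1 p2 q2 Cp Cq.
  destruct (HN _ _ Cp) as [g [G1 G2]]. destruct (HN _ _ Cq) as [h [H1 H2]].
  set (k := mul (inv h) g).
  assert (Eg : rho1 g (rho1 (inv g) p1) = p1) by (rewrite <- mul1, invr, one1; auto).
  assert (Eh : rho1 h (rho1 (inv h) p1) = p1) by (rewrite <- mul1, invr, one1; auto).
  assert (Ink : In k L).
  { apply HL. exists (rho1 (inv g) p1). split.
    - rewrite <- (iso1 g), Eg. lra.
    - unfold k. rewrite mul1, Eg. rewrite <- (iso1 h), Eh. lra. }
  assert (E2 : d2 (rho2 g x2) (rho2 h x2) = d2 (rho2 k x2) x2).
  { unfold k. rewrite mul2. rewrite <- (iso2 (inv h) (rho2 g x2) (rho2 h x2)).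
    rewrite <- (mul2 (inv h) h x2), invl, one2. reflexivity. }
  pose proof (HM k Ink).
  pose proof (d2tri p2 (rho2 g x2) q2). pose proof (d2tri (rho2 g x2) (rho2 h x2) q2).
  pose proof (d2sym p2 (rho2 g x2)). lra.
Qed.
Lemma pd_eq X1 X2 (d1 : X1 -> X1 -> R) (d2 : X2 -> X2 -> R) l1 l2 :
  geodesic_line d1 l1 -> geodesic_line d2 l2 ->
  forall s t s' t', prod_dist d1 d2 (l1 s, l2 t) (l1 s', l2 t') = d2e s t s' t'.
Proof.
  intros H1 H2 s t s' t'. unfold prod_dist, d2e; cbn [fst snd]. rewrite H1, H2, !pow2_abs. reflexivity.
Qed.

Lemma conv_lemma X1 X2 (d1 : X1 -> X1 -> R) (d2 : X2 -> X2 -> R) l1 l2 (C : X1 * X2 -> Prop) :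
  geodesic_line d1 l1 -> geodesic_line d2 l2 -> convex_set (prod_dist d1 d2) C ->
  convS (fun s t => C (l1 s, l2 t)).
Proof.
  intros H1 H2 Hc s1 t1 s2 t2 l S1 S2 Hl.
  set (Lc := d2e s1 t1 s2 t2).
  assert (HL2 : Lc * Lc = (s1-s2)^2 + (t1-t2)^2).
  { unfold Lc, d2e. apply sqrt_sqrt. pose proof (pow2_ge_0 (s1-s2)); pose proof (pow2_ge_0 (t1-t2)); lra. }
  assert (HL0 : 0 <= Lc) by (unfold Lc, d2e; apply sqrt_pos).
  destruct (Req_dec Lc 0) as [E|E].
  - rewrite E in HL2. pose proof (pow2_ge_0 (s1-s2)); pose proof (pow2_ge_0 (t1-t2)).
    assert (s1 - s2 = 0) by (apply NNPP; intro Hn; apply (pow_nonzero _ 2) in Hn; lra).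
    assert (t1 - t2 = 0) by (apply NNPP; intro Hn; apply (pow_nonzero _ 2) in Hn; lra).
    assert (s1 = s2) by lra. assert (t1 = t2) by lra. subst s2 t2.
    replace (s1 + l*(s1-s1)) with s1 by ring. replace (t1 + l*(t1-t1)) with t1 by ring. auto.
  - set (g := fun tau => (l1 (s1 + tau/Lc*(s2-s1)), l2 (t1 + tau/Lc*(t2-t1)))).
    assert (Hd : prod_dist d1 d2 (l1 s1, l2 t1) (l1 s2, l2 t2) = Lc) by (apply pd_eq; auto).
    assert (Hg : geodesic_segment (prod_dist d1 d2) g (l1 s1, l2 t1) (l1 s2, l2 t2)).
    { unfold geodesic_segment. rewrite Hd. split; [|split].
      - unfold g. f_equal; f_equal; unfold Rdiv; ring.
      - unfold g. f_equal; f_equal; field; lra.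
      - intros a b _ _. unfold g. rewrite (pd_eq _ _ d1 d2 l1 l2 H1 H2). unfold d2e.
        replace ((s1 + a / Lc * (s2 - s1) - (s1 + b / Lc * (s2 - s1))) ^ 2 +
                 (t1 + a / Lc * (t2 - t1) - (t1 + b / Lc * (t2 - t1))) ^ 2) with ((a-b)^2).
        + apply sqrt_sq_abs.
        + transitivity (((a-b)/Lc)^2 * ((s1-s2)^2+(t1-t2)^2)); [rewrite <- HL2; field; lra|field; lra]. }
    pose proof (Hc _ _ g S1 S2 Hg (l * Lc) ltac:(rewrite Hd; nra)) as P.
    unfold g in P. replace (l * Lc / Lc) with l in P by (field; lra). exact P.
Qed.

Theorem lemma3p1 (X1 X2 : Type) (d1 : X1 -> X1 -> R) (d2 : X2 -> X2 -> R)
  (G : Type) (mul : G -> G -> G) (one : G) (inv : G -> G)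
  (rho1 : G -> X1 -> X1) (rho2 : G -> X2 -> X2)
  (C : X1 * X2 -> Prop) (x1 : X1) (x2 : X2) (l1 : R -> X1) (l2 : R -> X2) :
  CAT0 d1 -> proper_space d1 -> CAT0 d2 -> proper_space d2 ->
  is_group mul one inv -> ~ finite_set (fun _ : G => True) ->
  isometric_action d1 mul one rho1 -> isometric_action d2 mul one rho2 ->
  convex_cocompact d1 rho1 -> convex_cocompact d2 rho2 ->
  properly_discontinuous (prod_dist d1 d2) (diag_action rho1 rho2) ->
  cocompact_convex_set (prod_dist d1 d2) (diag_action rho1 rho2) C ->
  C (x1, x2) ->
  geodesic_line d1 l1 -> (exists t, l1 t = x1) ->
  geodesic_line d2 l2 -> (exists t, l2 t = x2) ->
  let F := fun p : X1 * X2 => exists s t, p = (l1 s, l2 t) in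
  let CF := fun p => F p /\ C p in
  unbounded (prod_dist d1 d2) CF ->
  (exists r, geodesic_ray (prod_dist d1 d2) r /\ (forall t, 0 <= t -> F (r t)) /\
     hausdorff_finite (prod_dist d1 d2) CF (fun p => exists t, 0 <= t /\ p = r t))
  \/
  (exists l, geodesic_line (prod_dist d1 d2) l /\ (forall t, F (l t)) /\
     hausdorff_finite (prod_dist d1 d2) CF (fun p => exists t, p = l t)).
Proof.
  intros HC1 HP1 HC2 HP2 Hgrp _ A1 A2 CC1 CC2 _ HCC _ Hl1 _ Hl2 _ F CF Hunb.
  subst F CF.
  pose proof (proj1 HC1) as M1. pose proof (proj1 HC2) as M2.
  destruct HCC as [_ [_ [Hconv [_ Q]]]].
  destruct (cover X1 X2 d1 d2 G mul one rho1 rho2 C x1 x2 M1 M2 A1 A2 Q) as [N HN].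
  destruct (fiber X1 X2 d1 d2 G mul one inv rho1 rho2 C x1 x2 N M1 M2 Hgrp A1 A2 HP1 (proj1 CC1) HN)
    as [D1 HD1].
  destruct (fiber X2 X1 d2 d1 G mul one inv rho2 rho1 (fun p => C (snd p, fst p)) x2 x1 N
     M2 M1 Hgrp A2 A1 HP2 (proj1 CC2)) as [D2 HD2].
  { intros p2 p1 Cp. destruct (HN p1 p2 Cp) as [g [H1 H2]]. exists g; split; auto. }
  set (S := fun s t => C (l1 s, l2 t)).
  assert (PCS : PC S).
  { apply (PC_of_unb S D1 D2).
    - exact (conv_lemma X1 X2 d1 d2 l1 l2 C Hl1 Hl2 Hconv).
    - intros s t t' H1 H2. pose proof (HD1 _ _ _ H1 H2). rewrite Hl2 in H.
      pose proof (Rle_abs (t - t')). lra.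
    - intros s s' t H1 H2. pose proof (HD2 (l2 t) (l1 s) (l1 s') H1 H2). rewrite Hl1 in H.
      pose proof (Rle_abs (s - s')). lra.
    - intros M. destruct (Hunb M) as [p [q [[[s [t ->]] Cp] [[[s' [t' ->]] Cq] Hlt]]]].
      exists s, t, s', t'. rewrite (pd_eq _ _ d1 d2 l1 l2 Hl1 Hl2) in Hlt. auto. }
  destruct PCS as [p1 [p2 [v1 [v2 [E [Hv [[R1 R2]|[L1 L2]]]]]]]].
  - left. exists (fun tau => (l1 (p1 + tau*v1), l2 (p2 + tau*v2))). split; [|split].
    + intros s t _ _. rewrite (pd_eq _ _ d1 d2 l1 l2 Hl1 Hl2). unfold d2e.
      replace ((p1 + s * v1 - (p1 + t * v1)) ^ 2 + (p2 + s * v2 - (p2 + t * v2)) ^ 2) with ((s-t)^2).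
      * apply sqrt_sq_abs.
      * transitivity ((s-t)^2 * (v1^2+v2^2)); [rewrite Hv; ring|ring].
    + intros t _. exists (p1 + t*v1), (p2 + t*v2); reflexivity.
    + exists E. split.
      * intros a [[s [t ->]] Ca]. destruct (R1 s t Ca) as [tau [T0 T1]].
        exists (l1 (p1 + tau*v1), l2 (p2+tau*v2)). split; [exists tau; auto|].
        rewrite (pd_eq _ _ d1 d2 l1 l2 Hl1 Hl2); auto.
      * intros b [tau [T0 ->]]. destruct (R2 tau T0) as [s [t [Ss Hd]]].
        exists (l1 s, l2 t). split; [split; [exists s, t; reflexivity|exact Ss]|].
        rewrite (pd_eq _ _ d1 d2 l1 l2 Hl1 Hl2); auto.
  - right. exists (fun tau => (l1 (p1 + tau*v1), l2 (p2 + tau*v2))). split; [|split].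
    + intros s t. rewrite (pd_eq _ _ d1 d2 l1 l2 Hl1 Hl2). unfold d2e.
      replace ((p1 + s * v1 - (p1 + t * v1)) ^ 2 + (p2 + s * v2 - (p2 + t * v2)) ^ 2) with ((s-t)^2).
      * apply sqrt_sq_abs.
      * transitivity ((s-t)^2 * (v1^2+v2^2)); [rewrite Hv; ring|ring].
    + intros t. exists (p1 + t*v1), (p2 + t*v2); reflexivity.
    + exists E. split.
      * intros a [[s [t ->]] Ca]. destruct (L1 s t Ca) as [tau T1].
        exists (l1 (p1 + tau*v1), l2 (p2+tau*v2)). split; [exists tau; auto|].
        rewrite (pd_eq _ _ d1 d2 l1 l2 Hl1 Hl2); auto.
      * intros b [tau ->]. destruct (L2 tau) as [s [t [Ss Hd]]].
        exists (l1 s, l2 t). split; [split; [exists s, t; reflexivity|exact Ss]|].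
        rewrite (pd_eq _ _ d1 d2 l1 l2 Hl1 Hl2); auto.
Qed.
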